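(* Let $(c_k)_{k\ge0}\subset(0,\infty)$, $(\mu_k)_{k\ge0}\subset(0,\infty)$, and let $\rho$ be a $(0,\infty)$-valued random variable with law $\mathcal L_\rho$, $\mathbb E[\rho]=1$, not almost surely equal to $1$. Define $d_{k+1}=\mathbb E_{\mathcal L_\rho}\big[\frac{c_k(\mu_k\rho+d_k)}{c_k+(\mu_k\rho+d_k)}\big]$, $d^0_{k+1}=\frac{c_kd^0_k}{c_k+d^0_k}$ (the recursion with $\mathcal L_\rho=\delta_0$) and $d^1_{k+1}=\frac{c_k(\mu_k+d^1_k)}{c_k+(\mu_k+d^1_k)}$ (the recursion with $\mathcal L_\rho=\delta_1$). If $d^0_0=d_0=d^1_0\ge0$, then $d^0_k<d_k<d^1_k$ for all $k\in\mathbb N$. *)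

(* Defs.v *)
From Stdlib Require Import Reals List Classical ClassicalEpsilon.
Open Scope R_scope.

Set Implicit Arguments.

Section Prob.
Variable Omega : Type.

Definition sigma_algebra (F : (Omega -> Prop) -> Prop) : Prop :=
  F (fun _ => True) /\
  (forall A, F A -> F (fun w => ~ A w)) /\
  (forall A : nat -> Omega -> Prop, (forall n, F (A n)) ->
     F (fun w => exists n, A n w)).

Definition probability (F : (Omega -> Prop) -> Prop)
  (P : (Omega -> Prop) -> R) : Prop :=
  (forall A, F A -> 0 <= P A) /\
  P (fun _ => True) = 1 /\
  (forall A : nat -> Omega -> Prop, (forall n, F (A n)) ->
     (forall n m w, n <> m -> A n w -> A m w -> False) ->
     infinite_sum (fun n => P (A n)) (P (fun w => exists n, A n w))).

Definition prob_space F P : Prop := sigma_algebra F /\ probability F P.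

Definition measurable_fun (F : (Omega -> Prop) -> Prop) (f : Omega -> R) : Prop :=
  forall a : R, F (fun w => f w <= a).

Definition ind (A : Omega -> Prop) (w : Omega) : R :=
  if excluded_middle_informative (A w) then 1 else 0.

(* nonnegative simple functions, as lists of (coefficient, event) *)
Fixpoint sval (s : list (R * (Omega -> Prop))) (w : Omega) : R :=
  match s with
  | nil => 0
  | (a, A) :: t => a * ind A w + sval t w
  end.

Fixpoint sint (P : (Omega -> Prop) -> R) (s : list (R * (Omega -> Prop))) : R :=
  match s with
  | nil => 0
  | (a, A) :: t => a * P A + sint P t
  end.

Definition simple_below F (f : Omega -> R) (s : list (R * (Omega -> Prop))) : Prop :=
  Forall (fun p => 0 <= fst p /\ F (snd p)) s /\ forall w, sval s w <= f w.

(* Lebesgue expectation of a nonnegative measurable f: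
   E[f] = v  iff  v is the (finite) supremum of integrals of simple functions below f *)
Definition expectation_is F P (f : Omega -> R) (v : R) : Prop :=
  is_lub (fun x => exists s, simple_below F f s /\ x = sint P s) v.

End Prob.

(* Main.v *)
Require Import Defs.
From Stdlib Require Import Reals List Classical ClassicalEpsilon FunctionalExtensionality PropExtensionality Lra Lia.
Open Scope R_scope.
Set Implicit Arguments. Unset Strict Implicit.

Lemma pred_ext (Omega : Type) (A B : Omega -> Prop) :
  (forall w, A w <-> B w) -> A = B.
Proof. intros H; apply functional_extensionality; intro w;
  apply propositional_extensionality; auto. Qed.

Lemma F_compl (Omega : Type) (F : (Omega -> Prop) -> Prop) A :
  sigma_algebra F -> F A -> F (fun w => ~ A w).
Proof. intros [_ [H _]] HA; auto. Qed.

Lemma F_true (Omega : Type) (F : (Omega -> Prop) -> Prop) :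
  sigma_algebra F -> F (fun _ => True).
Proof. intros [H _]; auto. Qed.

Lemma F_false (Omega : Type) (F : (Omega -> Prop) -> Prop) :
  sigma_algebra F -> F (fun _ => False).
Proof. intros HF. replace (fun _ : Omega => False) with (fun w : Omega => ~ True).
  apply F_compl; auto; apply F_true; auto.
  apply pred_ext; tauto. Qed.

Lemma F_union (Omega : Type) (F : (Omega -> Prop) -> Prop) A B :
  sigma_algebra F -> F A -> F B -> F (fun w => A w \/ B w).
Proof. intros HF HA HB. destruct HF as [_ [_ H]].
  replace (fun w => A w \/ B w) with (fun w => exists n:nat, (fun n => match n with O => A | _ => B end) n w).
  apply H. intros [|n]; auto.
  apply pred_ext; intro w; split.
  intros [[|n] Hn]; auto.
  intros [H1|H1]; [exists O|exists 1%nat]; auto. Qed.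

Lemma F_inter (Omega : Type) (F : (Omega -> Prop) -> Prop) A B :
  sigma_algebra F -> F A -> F B -> F (fun w => A w /\ B w).
Proof. intros HF HA HB.
  replace (fun w => A w /\ B w) with (fun w => ~ ((fun w => ~ A w) w \/ (fun w => ~ B w) w)).
  apply F_compl; auto. apply F_union; auto; apply F_compl; auto.
  apply pred_ext; intro w; tauto. Qed.

Lemma F_cunion (Omega : Type) (F : (Omega -> Prop) -> Prop) (A : nat -> Omega -> Prop) :
  sigma_algebra F -> (forall n, F (A n)) -> F (fun w => exists n, A n w).
Proof. intros [_ [_ H]]; auto. Qed.

Lemma inf_sum_const0 : infinite_sum (fun _ => 0) 0.
Proof. intros e He; exists O; intros n _. unfold R_dist.
  replace (sum_f_R0 (fun _ => 0) n) with 0.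
  rewrite Rminus_0_r, Rabs_R0; auto.
  induction n; simpl; auto; rewrite <- IHn; ring. Qed.

Lemma P_empty (Omega : Type) (F : (Omega -> Prop) -> Prop) P :
  prob_space F P -> P (fun _ : Omega => False) = 0.
Proof. intros [HF [_ [_ HP]]].
  assert (H := HP (fun _ => fun _ => False) (fun _ => F_false HF) (fun n m w _ H _ => H)).
  cbv beta in H. replace (fun w : Omega => exists n:nat, False) with (fun _ : Omega => False) in H
    by (apply pred_ext; intro w; split; [tauto| intros [_ []]]).
  set (a := P (fun _ => False)) in *.
  destruct (Req_dec a 0) as [|Hne]; auto. exfalso.
  destruct (H (Rabs a / 2)) as [N HN]. apply Rabs_pos_lt in Hne; lra.
  specialize (HN (S N) ltac:(lia)). unfold R_dist in HN.
  assert (forall n, sum_f_R0 (fun _ => a) n = INR (S n) * a).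
  { induction n; simpl sum_f_R0. simpl; ring. rewrite IHn, !S_INR; ring. }
  rewrite H0 in HN.
  replace (INR (S (S N)) * a - a) with (INR (S N) * a) in HN by (rewrite (S_INR (S N)); ring).
  rewrite Rabs_mult, (Rabs_right (INR (S N))) in HN by (apply Rle_ge, pos_INR).
  rewrite S_INR in HN. assert (0 <= INR N) by apply pos_INR.
  apply Rabs_pos_lt in Hne. nra. Qed.

Lemma P_ext (Omega : Type) (P : (Omega -> Prop) -> R) A B :
  (forall w, A w <-> B w) -> P A = P B.
Proof. intros H; rewrite (@pred_ext _ A B H); auto. Qed.

Lemma P_split (Omega : Type) (F : (Omega -> Prop) -> Prop) P X E :
  prob_space F P -> F X -> F E ->
  P X = P (fun w => X w /\ E w) + P (fun w => X w /\ ~ E w).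
Proof. intros Hps HX HE. pose proof (P_empty Hps) as H0.
  destruct Hps as [HF [_ [_ HP]]].
  set (A := fun n : nat => match n with O => fun w => X w /\ E w
     | 1%nat => fun w => X w /\ ~ E w | _ => fun _ => False end).
  assert (HA : forall n, F (A n)).
  { intros [|[|n]]; simpl. apply F_inter; auto. apply F_inter; auto. apply F_compl; auto.
    apply F_false; auto. }
  assert (Hd : forall n m w, n <> m -> A n w -> A m w -> False).
  { intros [|[|n]] [|[|m]] w Hnm; simpl; try tauto; lia. }
  specialize (HP A HA Hd).
  replace (fun w => exists n, A n w) with X in HP.
  2:{ apply pred_ext; intro w; split.
      intro Hx; destruct (classic (E w)); [exists O|exists 1%nat]; simpl; auto.
      intros [[|[|n]] Hn]; simpl in Hn; tauto. }
  apply (uniqueness_sum _ _ _ HP).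
  intros e He. exists 1%nat. intros n Hn. unfold R_dist.
  assert (sum_f_R0 (fun n => P (A n)) n = P (A O) + P (A 1%nat)).
  { induction n. lia. destruct n. simpl; ring. simpl sum_f_R0 in *.
    rewrite IHn by lia. simpl. rewrite H0; ring. }
  rewrite H. simpl. replace (_ - _) with 0 by ring. rewrite Rabs_R0; auto. Qed.

Lemma P_nonneg (Omega : Type) (F : (Omega -> Prop) -> Prop) P A :
  prob_space F P -> F A -> 0 <= P A.
Proof. intros [_ [H _]] HA; auto. Qed.

Lemma P_mono (Omega : Type) (F : (Omega -> Prop) -> Prop) P A B :
  prob_space F P -> F A -> F B -> (forall w, A w -> B w) -> P A <= P B.
Proof. intros Hps HA HB Hs. rewrite (P_split Hps HB HA).
  replace (fun w => B w /\ A w) with A by (apply pred_ext; intro w; split; tauto || (intros; split; auto)).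
  assert (0 <= P (fun w => B w /\ ~ A w)).
  { eapply P_nonneg. exact Hps. apply F_inter. apply Hps. auto. apply F_compl. apply Hps. auto. }
  lra. Qed.

Definition sumL (T : Type) (g : T -> R) (L : list T) : R :=
  fold_right (fun p acc => g p + acc) 0 L.

Lemma sumL_app T (g : T -> R) L1 L2 : sumL g (L1 ++ L2) = sumL g L1 + sumL g L2.
Proof. induction L1; simpl; [ring| unfold sumL in *; simpl; rewrite IHL1; ring]. Qed.

Lemma sumL_flat T U (g : U -> R) (k : T -> list U) L :
  sumL g (flat_map k L) = sumL (fun p => sumL g (k p)) L.
Proof. induction L; simpl; auto. rewrite sumL_app, IHL; auto. Qed.

Lemma sumL_ext T (g1 g2 : T -> R) L : (forall p, In p L -> g1 p = g2 p) -> sumL g1 L = sumL g2 L.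
Proof. induction L; simpl; auto. intros H; rewrite H, IHL; auto. Qed.

Lemma sumL_le T (g1 g2 : T -> R) L : (forall p, In p L -> g1 p <= g2 p) -> sumL g1 L <= sumL g2 L.
Proof. induction L; simpl; [lra|]. intros H. pose proof (H a (or_introl eq_refl)).
  pose proof (IHL (fun p Hp => H p (or_intror Hp))). lra. Qed.

Lemma sumL_plus T (g1 g2 : T -> R) L : sumL (fun p => g1 p + g2 p) L = sumL g1 L + sumL g2 L.
Proof. induction L; simpl; [ring|]. rewrite IHL; ring. Qed.

Lemma sumL_scal T (g : T -> R) c L : sumL (fun p => c * g p) L = c * sumL g L.
Proof. induction L; simpl; [ring|]. rewrite IHL; ring. Qed.

Lemma sint_sumL Omega (P : (Omega -> Prop) -> R) s :
  sint P s = sumL (fun p => fst p * P (snd p)) s.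
Proof. induction s as [|[a A] s IH]; simpl; auto. rewrite IH; auto. Qed.

Lemma sval_sumL Omega (s : list (R * (Omega -> Prop))) w :
  sval s w = sumL (fun p => fst p * Defs.ind (snd p) w) s.
Proof. induction s as [|[a A] s IH]; simpl; auto. rewrite IH; auto. Qed.

Fixpoint part Omega (s : list (R * (Omega -> Prop))) : list (R * (Omega -> Prop)) :=
  match s with
  | nil => (0, fun _ => True) :: nil
  | (a, E) :: t => flat_map (fun p => (fst p + a, fun w => snd p w /\ E w)
                     :: (fst p, fun w => snd p w /\ ~ E w) :: nil) (part t)
  end.

Lemma ind_in Omega (A : Omega -> Prop) w : A w -> Defs.ind A w = 1.
Proof. unfold Defs.ind; destruct excluded_middle_informative; tauto. Qed.
Lemma ind_out Omega (A : Omega -> Prop) w : ~ A w -> Defs.ind A w = 0.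
Proof. unfold Defs.ind; destruct excluded_middle_informative; tauto. Qed.

Lemma part_meas Omega (F : (Omega -> Prop) -> Prop) s :
  sigma_algebra F -> (forall p, In p s -> F (snd p)) -> forall p, In p (part s) -> F (snd p).
Proof. intros HF. induction s as [|[a E] s IH]; simpl.
  - intros _ p [<-|[]]; simpl. apply F_true; auto.
  - intros Hs p Hp. apply in_flat_map in Hp. destruct Hp as [q [Hq Hp]].
    assert (F (snd q)) by (apply IH; auto).
    assert (F E) by (apply (Hs (a, E)); auto).
    destruct Hp as [<-|[<-|[]]]; simpl.
    apply F_inter; auto. apply F_inter; auto; apply F_compl; auto.
Qed.

Lemma part_K Omega (F : (Omega -> Prop) -> Prop) P s C :
  prob_space F P -> (forall p, In p s -> F (snd p)) -> F C ->
  sumL (fun p => P (fun w => snd p w /\ C w)) (part s) = P C.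
Proof. intros Hps. revert C. induction s as [|[a E] s IH]; simpl; intros C Hs HC.
  - unfold sumL; simpl. rewrite Rplus_0_r. apply P_ext; tauto.
  - rewrite sumL_flat. rewrite <- (IH C); auto.
    apply sumL_ext. intros q Hq. unfold sumL; simpl.
    assert (F (snd q)) by (eapply part_meas; eauto; apply Hps).
    assert (F E) by (apply (Hs (a, E)); auto).
    rewrite (@P_split _ F P (fun w => snd q w /\ C w) E); auto.
    rewrite Rplus_0_r. f_equal; apply P_ext; tauto.
    apply F_inter; auto; apply Hps.
Qed.

Lemma part_SI Omega (F : (Omega -> Prop) -> Prop) P s :
  prob_space F P -> (forall p, In p s -> F (snd p)) ->
  sumL (fun p => fst p * P (snd p)) (part s) = sint P s.
Proof. intros Hps. induction s as [|[a E] s IH]; simpl; intros Hs.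
  - unfold sumL; simpl. ring.
  - rewrite sumL_flat. rewrite <- IH; auto.
    assert (F E) by (apply (Hs (a, E)); auto).
    rewrite <- (@part_K _ F P s E); auto.
    rewrite <- sumL_scal, <- sumL_plus.
    apply sumL_ext. intros q Hq. unfold sumL; simpl.
    assert (F (snd q)) by (eapply part_meas; eauto; apply Hps).
    rewrite (@P_split _ F P (snd q) E); auto. ring.
Qed.

Lemma part_SV Omega (s : list (R * (Omega -> Prop))) (h : R -> R) w :
  sumL (fun p => h (fst p) * Defs.ind (snd p) w) (part s) = h (sval s w).
Proof. revert h. induction s as [|[a E] s IH]; simpl; intros h.
  - unfold sumL; simpl. rewrite ind_in; auto. ring.
  - rewrite sumL_flat. destruct (classic (E w)) as [He|He].
    + rewrite ind_in by auto. replace (a * 1 + sval s w) with (sval s w + a) by ring. rewrite <- (IH (fun v => h (v + a))).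
      apply sumL_ext; intros q _. unfold sumL; simpl.
      rewrite (ind_out (A := fun w => snd q w /\ ~ E w)) by tauto.
      destruct (classic (snd q w)).
      rewrite !ind_in; auto. ring.
      rewrite !ind_out by tauto. ring.
    + rewrite ind_out by auto. replace (a * 0 + sval s w) with (sval s w) by ring. rewrite <- (IH h).
      apply sumL_ext; intros q _. unfold sumL; simpl.
      rewrite (ind_out (A := fun w => snd q w /\ E w)) by tauto.
      destruct (classic (snd q w)).
      rewrite !ind_in; auto. ring.
      rewrite !ind_out by tauto. ring.
Qed.

Lemma sumL_map T U (g : U -> R) (f : T -> U) L : sumL g (map f L) = sumL (fun p => g (f p)) L.
Proof. induction L; simpl; auto. unfold sumL in *; simpl; rewrite IHL; auto. Qed.

Lemma UB Omega (F : (Omega -> Prop) -> Prop) P rho s al be :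
  prob_space F P -> expectation_is F P rho 1 -> (forall w, 0 < rho w) -> 0 < be ->
  (forall p, In p s -> F (snd p)) -> (forall w, sval s w <= al + be * rho w) ->
  sint P s <= al + be.
Proof.
  intros Hps He Hpos Hbe Hs Hle.
  set (h := fun v => Rmax 0 ((v - al) / be)).
  set (t := map (fun p : R * (Omega -> Prop) => (h (fst p), snd p)) (part s)).
  assert (Ht : simple_below F rho t).
  { split.
    - apply Forall_forall. intros p Hp. unfold t in Hp. apply in_map_iff in Hp.
      destruct Hp as [q [<- Hq]]. simpl. split. apply Rmax_l.
      eapply part_meas; eauto. apply Hps.
    - intro w. rewrite sval_sumL. unfold t. rewrite sumL_map. simpl.
      rewrite (part_SV s h w). unfold h. apply Rmax_lub. left; auto.
      specialize (Hle w). apply (Rmult_le_reg_r be); auto.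
      unfold Rdiv; rewrite Rmult_assoc, Rinv_l by lra. lra. }
  assert (Hst : sint P t <= 1). { apply (proj1 He). exists t; auto. }
  rewrite <- (part_SI Hps Hs).
  rewrite sint_sumL in Hst. unfold t in Hst. rewrite sumL_map in Hst. simpl in Hst.
  assert (H1 : sumL (fun p : R * (Omega -> Prop) => P (snd p)) (part s) = 1).
  { rewrite <- (proj1 (proj2 (proj2 Hps))).
    rewrite <- (@part_K _ F P s (fun _ => True)); auto. apply sumL_ext; intros; apply P_ext; tauto.
    apply F_true; apply Hps. }
  apply Rle_trans with (sumL (fun p : R * (Omega -> Prop) => (al + be * h (fst p)) * P (snd p)) (part s)).
  - apply sumL_le. intros p Hp. apply Rmult_le_compat_r.
    eapply P_nonneg; eauto. eapply part_meas; eauto. apply Hps.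
    unfold h. apply Rle_trans with (al + be * ((fst p - al) / be)).
    right; field; lra. apply Rplus_le_compat_l, Rmult_le_compat_l. lra. apply Rmax_r.
  - replace (sumL (fun p : R * (Omega -> Prop) => (al + be * h (fst p)) * P (snd p)) (part s))
      with (al * sumL (fun p : R * (Omega -> Prop) => P (snd p)) (part s) +
            be * sumL (fun p : R * (Omega -> Prop) => h (fst p) * P (snd p)) (part s)).
    rewrite H1. nra.
    rewrite <- !sumL_scal, <- sumL_plus. apply sumL_ext; intros; ring.
Qed.

Lemma CZ Omega (F : (Omega -> Prop) -> Prop) P (A : nat -> Omega -> Prop) :
  prob_space F P -> (forall n, F (A n)) -> (forall n w, A n w -> A (S n) w) ->
  (forall n, P (A n) = 0) -> P (fun w => exists n, A n w) = 0.
Proof.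
  intros Hps HA Hinc H0.
  assert (Hmono : forall n m w, (n <= m)%nat -> A n w -> A m w).
  { intros n m w Hnm; induction Hnm; auto. }
  set (Bs := fun n => match n with O => A O | S m => fun w => A (S m) w /\ ~ A m w end).
  assert (HBA : forall n w, Bs n w -> A n w). { intros [|n] w; simpl; tauto. }
  assert (HB : forall n, F (Bs n)).
  { intros [|n]; simpl; auto. apply F_inter; auto. apply Hps. apply F_compl; auto. apply Hps. }
  assert (Hd : forall n m w, n <> m -> Bs n w -> Bs m w -> False).
  { assert (forall n m w, (n < m)%nat -> Bs n w -> Bs m w -> False).
    { intros n [|m] w Hnm Hn Hm; [lia|]. simpl in Hm. apply (proj2 Hm).
      apply (Hmono n); [lia|]. auto. }
    intros n m w Hnm; destruct (Nat.lt_total n m) as [?|[?|?]]; eauto. }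
  pose proof (proj2 (proj2 (proj2 Hps)) Bs HB Hd) as Hsum.
  replace (fun w => exists n, Bs n w) with (fun w => exists n, A n w) in Hsum.
  2:{ apply pred_ext; intro w; split.
      - intros [n Hn]. induction n. exists O; auto.
        destruct (classic (A n w)); auto. exists (S n); simpl; auto.
      - intros [n Hn]; exists n; auto. }
  replace (fun n => P (Bs n)) with (fun _ : nat => 0) in Hsum.
  apply (uniqueness_sum _ _ _ Hsum inf_sum_const0).
  apply functional_extensionality; intros [|n]; simpl. rewrite H0; auto.
  symmetry. apply Rle_antisym. rewrite <- (H0 (S n)). apply (P_mono (F:=F)); auto.
  apply F_inter; auto. apply Hps. apply F_compl; auto. apply Hps. 
  apply (P_nonneg (F:=F)); auto. apply F_inter; auto. apply Hps. apply F_compl; auto. apply Hps.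
Qed.

Lemma small_inv (r : R) : 0 < r -> exists n : nat, / (INR n + 1) < r.
Proof. intros Hr. destruct (archimed_cor1 r Hr) as [N [HN HN0]]. exists N.
  apply Rle_lt_trans with (/ INR N); auto. apply Rinv_le_contravar.
  apply lt_0_INR; auto. lra. Qed.

Lemma inv_pos n : 0 < / (INR n + 1).
Proof. apply Rinv_0_lt_compat. pose proof (pos_INR n); lra. Qed.

Lemma inv_dec n : / (INR (S n) + 1) <= / (INR n + 1).
Proof. apply Rinv_le_contravar. pose proof (pos_INR n); lra. rewrite S_INR; lra. Qed.

Lemma E1 Omega (F : (Omega -> Prop) -> Prop) P rho :
  prob_space F P -> measurable_fun F rho -> (forall w, 0 < rho w) ->
  exists t, 0 < t /\ 0 < P (fun w => ~ rho w <= t).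
Proof.
  intros Hps Hm Hpos.
  set (A := fun n : nat => fun w => ~ rho w <= / (INR n + 1)).
  assert (HA : forall n, F (A n)). { intro n. unfold A. apply (F_compl (F:=F) (A := fun w => rho w <= / (INR n + 1))). apply Hps. apply Hm. }
  destruct (classic (forall n, P (A n) = 0)) as [Hall|Hex].
  - exfalso. assert (HU := CZ Hps HA).
    replace (fun w => exists n, A n w) with (fun _ : Omega => True) in HU.
    rewrite (proj1 (proj2 (proj2 Hps))) in HU. assert (1 = 0); [apply HU; auto|lra].
    intros n w; unfold A; pose proof (inv_dec n); lra.
    apply pred_ext; intro w; split; auto. intros _.
    destruct (small_inv (Hpos w)) as [n Hn]. exists n; unfold A; lra.
  - apply not_all_ex_not in Hex. destruct Hex as [n Hn]. exists (/ (INR n + 1)). split.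
    apply inv_pos. pose proof (P_nonneg Hps (HA n)). unfold A in *. lra.
Qed.

Lemma E2 Omega (F : (Omega -> Prop) -> Prop) P rho :
  prob_space F P -> measurable_fun F rho -> P (fun w => rho w = 1) <> 1 ->
  exists e, 0 < e /\ 0 < P (fun w => rho w <= 1 - e \/ ~ rho w <= 1 + e).
Proof.
  intros Hps Hm Hne.
  set (A := fun n : nat => fun w => rho w <= 1 - / (INR n + 1) \/ ~ rho w <= 1 + / (INR n + 1)).
  assert (HA : forall n, F (A n)).
  { intro n; unfold A. apply (F_union (F:=F) (A := fun w => rho w <= 1 - / (INR n + 1)) (B := fun w => ~ rho w <= 1 + / (INR n + 1))). apply Hps. apply Hm.
    apply (F_compl (F:=F) (A := fun w => rho w <= 1 + / (INR n + 1))). apply Hps. apply Hm. }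
  destruct (classic (forall n, P (A n) = 0)) as [Hall|Hex].
  - exfalso. assert (HU := CZ Hps HA).
    assert (HU0 : P (fun w => exists n, A n w) = 0).
    { apply HU; auto. intros n w; unfold A; pose proof (inv_dec n); lra. }
    assert (HFU : F (fun w => exists n, A n w)) by (apply F_cunion; auto; apply Hps).
    pose proof (P_split Hps (F_true (proj1 Hps)) HFU) as Hs.
    rewrite (proj1 (proj2 (proj2 Hps))) in Hs.
    replace (fun w => True /\ exists n, A n w) with (fun w => exists n, A n w) in Hs
      by (apply pred_ext; tauto).
    replace (fun w => True /\ ~ exists n, A n w) with (fun w => rho w = 1) in Hs.
    lra.
    apply pred_ext; intro w; split.
    + intros Hw; split; auto. intros [n Hn]; unfold A in Hn; rewrite Hw in Hn.
      pose proof (inv_pos n); lra.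
    + intros [_ Hw]. apply NNPP; intro Hw1. apply Hw.
      destruct (small_inv (r := Rabs (rho w - 1))) as [n Hn].
      apply Rabs_pos_lt; lra. exists n. unfold A.
      destruct (Rle_dec (rho w) 1).
      left. rewrite Rabs_left1 in Hn by lra. lra.
      right. rewrite Rabs_right in Hn by lra. lra.
  - apply not_all_ex_not in Hex. destruct Hex as [n Hn]. exists (/ (INR n + 1)). split.
    apply inv_pos. pose proof (P_nonneg Hps (HA n)). unfold A in *. lra.
Qed.

Lemma g_nonneg c x : 0 < c -> 0 <= x -> 0 <= c * x / (c + x).
Proof. intros. apply Rmult_le_pos. nra. apply Rlt_le, Rinv_0_lt_compat; lra. Qed.

Lemma g_diff c x y : 0 < c -> 0 <= x -> 0 <= y ->
  c * y / (c + y) - c * x / (c + x) = c * c * (y - x) / ((c + x) * (c + y)).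
Proof. intros. field; lra. Qed.

Lemma g_mono c x y : 0 < c -> 0 <= x -> x <= y -> c * x / (c + x) <= c * y / (c + y).
Proof. intros. assert (0 <= c * c * (y - x) / ((c + x) * (c + y))).
  apply Rmult_le_pos. assert (0 <= c*c) by nra. nra. apply Rlt_le, Rinv_0_lt_compat; nra.
  rewrite <- g_diff in H2; lra. Qed.

Lemma g_smono c x y : 0 < c -> 0 <= x -> x < y -> c * x / (c + x) < c * y / (c + y).
Proof. intros. assert (0 < c * c * (y - x) / ((c + x) * (c + y))).
  apply Rmult_lt_0_compat. assert (0 < c*c) by nra. nra. apply Rinv_0_lt_compat; nra.
  rewrite <- g_diff in H2; lra. Qed.

Lemma gap_id c mu d r : 0 < c -> 0 < mu -> 0 <= d -> 0 < r ->
  (c * (mu + d) / (c + (mu + d)) - c * c * mu / ((c + mu + d) * (c + mu + d)))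
  + c * c * mu / ((c + mu + d) * (c + mu + d)) * r - c * (mu * r + d) / (c + (mu * r + d))
  = c * c * mu * mu * ((r - 1) * (r - 1)) / ((c + mu + d) * (c + mu + d) * (c + mu * r + d)).
Proof. intros. field. split; nra. Qed.

Lemma tangent c mu d r : 0 < c -> 0 < mu -> 0 <= d -> 0 < r ->
  c * (mu * r + d) / (c + (mu * r + d)) <=
  (c * (mu + d) / (c + (mu + d)) - c * c * mu / ((c + mu + d) * (c + mu + d)))
  + c * c * mu / ((c + mu + d) * (c + mu + d)) * r.
Proof. intros. pose proof (gap_id H H0 H1 H2).
  assert (0 <= c * c * mu * mu * ((r - 1) * (r - 1)) / ((c + mu + d) * (c + mu + d) * (c + mu * r + d))).
  apply Rmult_le_pos. assert (0 < c*c*mu*mu) by (repeat apply Rmult_lt_0_compat; lra). apply Rmult_le_pos; [lra|]. pose proof (Rle_0_sqr (r-1)); unfold Rsqr in *; lra.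
  apply Rlt_le, Rinv_0_lt_compat. repeat apply Rmult_lt_0_compat; nra. lra. Qed.

Lemma gap_bound c mu d r e : 0 < c -> 0 < mu -> 0 <= d -> 0 < r -> 0 < e ->
  (r <= 1 - e \/ ~ r <= 1 + e) ->
  c * (mu * r + d) / (c + (mu * r + d)) +
    c * c * mu * mu * (e * e) / ((c + mu + d) * (c + mu + d) * (c + d + mu * (1 + e))) <=
  (c * (mu + d) / (c + (mu + d)) - c * c * mu / ((c + mu + d) * (c + mu + d)))
  + c * c * mu / ((c + mu + d) * (c + mu + d)) * r.
Proof. intros Hc Hmu Hd Hr He Hre. pose proof (gap_id Hc Hmu Hd Hr).
  set (K := c * c * mu * mu). set (Y := (c + mu + d) * (c + mu + d)).
  assert (HK : 0 < K) by (unfold K; repeat apply Rmult_lt_0_compat; lra).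
  assert (HY : 0 < Y) by (unfold Y; nra).
  assert (Hineq : e * e * (c + mu * r + d) <= (r - 1) * (r - 1) * (c + d + mu * (1 + e))).
  { clear H. destruct Hre as [Hre|Hre].
    - assert (e * e <= (r-1)*(r-1)) by (replace ((r-1)*(r-1)) with ((1-r)*(1-r)) by ring; apply Rmult_le_compat; lra). assert (c + mu * r + d <= c + d + mu * (1 + e)) by nra.
      assert (0 <= e*e) by nra. assert (0 <= mu * r) by nra. apply Rmult_le_compat; lra.
    - apply Rnot_le_lt in Hre. set (s := r - 1).
      replace (c + mu * r + d) with (c + d + mu + mu * s) by (unfold s; ring).
      replace (c + d + mu * (1 + e)) with (c + d + mu + mu * e) by ring.
      assert (e < s) by (unfold s; lra).
      assert (0 <= (s*s - e*e) * (c + d + mu)) by (apply Rmult_le_pos; nra).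
      assert (0 <= mu * e * s * (s - e)) by (apply Rmult_le_pos; [|lra]; assert (0 < mu*e) by nra; nra).
      nra. }
  assert (K * (e * e) / (Y * (c + d + mu * (1 + e))) <= K * ((r - 1) * (r - 1)) / (Y * (c + mu * r + d))).
  { unfold Rdiv. rewrite !Rinv_mult. 
    assert (0 < c + d + mu * (1 + e)) by nra. assert (0 < c + mu * r + d) by nra.
    replace (K * (e * e) * (/ Y * / (c + d + mu * (1 + e)))) with
      ((K * / Y) * (e * e * (c + mu * r + d)) * (/ (c + d + mu * (1 + e)) * / (c + mu * r + d))) by (field; lra).
    replace (K * ((r - 1) * (r - 1)) * (/ Y * / (c + mu * r + d))) with
      ((K * / Y) * ((r - 1) * (r - 1) * (c + d + mu * (1 + e))) * (/ (c + d + mu * (1 + e)) * / (c + mu * r + d))) by (field; lra).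
    apply Rmult_le_compat_r. apply Rlt_le, Rmult_lt_0_compat; apply Rinv_0_lt_compat; lra.
    apply Rmult_le_compat_l; auto. apply Rlt_le, Rmult_lt_0_compat; auto. apply Rinv_0_lt_compat; auto. }
  unfold K, Y in *. lra. Qed.

Lemma LBexp Omega (F : (Omega -> Prop) -> Prop) P rho c mu dd v t :
  prob_space F P -> measurable_fun F rho -> (forall w, 0 < rho w) ->
  0 < c -> 0 < mu -> 0 <= dd -> 0 < t -> 0 < P (fun w => ~ rho w <= t) ->
  expectation_is F P (fun w => c * (mu * rho w + dd) / (c + (mu * rho w + dd))) v ->
  c * dd / (c + dd) < v.
Proof.
  intros Hps Hm Hpos Hc Hmu Hd Ht HPt He.
  set (g0 := c * dd / (c + dd)). set (g1 := c * (mu * t + dd) / (c + (mu * t + dd))).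
  assert (Hg : g0 < g1) by (apply g_smono; auto; nra).
  assert (Hg0 : 0 <= g0) by (apply g_nonneg; auto).
  set (s := (g0, fun _ : Omega => True) :: (g1 - g0, fun w => ~ rho w <= t) :: nil).
  assert (Hs : simple_below F (fun w => c * (mu * rho w + dd) / (c + (mu * rho w + dd))) s).
  { split.
    - constructor. split; simpl; auto. apply F_true, Hps.
      constructor. split; simpl. lra. apply (F_compl (F:=F) (A := fun w => rho w <= t)). apply Hps. apply Hm.
      constructor.
    - intro w. simpl. rewrite (ind_in (A := fun _ => True)) by auto.
      destruct (classic (~ rho w <= t)) as [Hw|Hw].
      + rewrite (ind_in (A := fun w => ~ rho w <= t)) by auto.
        apply Rnot_le_lt in Hw. assert (g1 <= c * (mu * rho w + dd) / (c + (mu * rho w + dd))).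
        apply g_mono; auto. nra. nra. lra.
      + rewrite (ind_out (A := fun w => ~ rho w <= t)) by auto.
        assert (g0 <= c * (mu * rho w + dd) / (c + (mu * rho w + dd))).
        apply g_mono; auto. pose proof (Hpos w); nra. lra. }
  assert (Hle : sint P s <= v). { apply (proj1 He). exists s; auto. }
  simpl in Hle. rewrite (proj1 (proj2 (proj2 Hps))) in Hle.
  fold g0. assert (0 < (g1 - g0) * P (fun w => ~ rho w <= t)) by (apply Rmult_lt_0_compat; lra).
  lra.
Qed.

Lemma UBexp Omega (F : (Omega -> Prop) -> Prop) P rho c mu dd v e :
  prob_space F P -> measurable_fun F rho -> (forall w, 0 < rho w) ->
  expectation_is F P rho 1 ->
  0 < c -> 0 < mu -> 0 <= dd -> 0 < e ->
  0 < P (fun w => rho w <= 1 - e \/ ~ rho w <= 1 + e) ->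
  expectation_is F P (fun w => c * (mu * rho w + dd) / (c + (mu * rho w + dd))) v ->
  v < c * (mu + dd) / (c + (mu + dd)).
Proof.
  intros Hps Hm Hpos Hrho Hc Hmu Hd He HPA Hv.
  set (A := fun w => rho w <= 1 - e \/ ~ rho w <= 1 + e) in *.
  assert (HFA : F A).
  { unfold A. apply (F_union (F:=F) (A := fun w => rho w <= 1 - e) (B := fun w => ~ rho w <= 1 + e)).
    apply Hps. apply Hm. apply (F_compl (F:=F) (A := fun w => rho w <= 1 + e)). apply Hps. apply Hm. }
  set (bet := c * c * mu / ((c + mu + dd) * (c + mu + dd))).
  set (al := c * (mu + dd) / (c + (mu + dd)) - bet).
  set (de := c * c * mu * mu * (e * e) / ((c + mu + dd) * (c + mu + dd) * (c + dd + mu * (1 + e)))).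
  assert (Hbet : 0 < bet).
  { unfold bet. apply Rmult_lt_0_compat. repeat apply Rmult_lt_0_compat; lra.
    apply Rinv_0_lt_compat; apply Rmult_lt_0_compat; lra. }
  assert (Hde : 0 < de).
  { unfold de. apply Rmult_lt_0_compat. repeat apply Rmult_lt_0_compat; lra.
    apply Rinv_0_lt_compat; repeat apply Rmult_lt_0_compat; nra. }
  assert (Hub : v <= al + bet - de * P A).
  { apply (proj2 Hv). intros x [s [[Hf Hsv] ->]].
    assert (H := @UB _ F P rho ((de, A) :: s) al bet Hps Hrho Hpos Hbet).
    simpl in H. cut (de * P A + (sint P s) <= al + bet). lra.
    apply H.
    - intros p [<-|Hp]; simpl; auto. rewrite Forall_forall in Hf. apply (Hf p Hp).
    - intro w. specialize (Hsv w). simpl in Hsv. destruct (classic (A w)) as [Hw|Hw].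
      + rewrite ind_in by auto. pose proof (gap_bound Hc Hmu Hd (Hpos w) He Hw). fold bet al de in H0. lra.
      + rewrite ind_out by auto. pose proof (tangent Hc Hmu Hd (Hpos w)). fold bet al in H0. lra. }
  assert (0 < de * P A) by (apply Rmult_lt_0_compat; auto).
  unfold al in Hub. lra.
Qed.
Unset Implicit Arguments.

Theorem theorem3p9
  (Omega : Type) (F : (Omega -> Prop) -> Prop) (P : (Omega -> Prop) -> R)
  (rho : Omega -> R) (c mu d0 d d1 : nat -> R) :
  prob_space F P ->
  measurable_fun F rho ->
  (forall w, 0 < rho w) ->
  expectation_is F P rho 1 ->
  P (fun w => rho w = 1) <> 1 ->
  (forall k, 0 < c k) ->
  (forall k, 0 < mu k) ->
  (forall k, expectation_is F P
      (fun w => c k * (mu k * rho w + d k) / (c k + (mu k * rho w + d k)))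
      (d (S k))) ->
  (forall k, d0 (S k) = c k * d0 k / (c k + d0 k)) ->
  (forall k, d1 (S k) = c k * (mu k + d1 k) / (c k + (mu k + d1 k))) ->
  d0 0%nat = d 0%nat -> d 0%nat = d1 0%nat -> 0 <= d 0%nat ->
  forall k : nat, (1 <= k)%nat -> d0 k < d k /\ d k < d1 k.
Proof.
  intros Hps Hm Hpos Hrho Hne Hc Hmu Hd Hd0 Hd1 E0 E1' Hnn.
  destruct (E1 Hps Hm Hpos) as [t [Ht HPt]].
  destruct (E2 Hps Hm Hne) as [e [He HPe]].
  assert (Step : forall k, 0 <= d0 k -> d0 k <= d k -> d k <= d1 k ->
            d0 (S k) < d (S k) /\ d (S k) < d1 (S k)).
  { intros k H0 H1 H2. split.
    - rewrite Hd0. apply Rle_lt_trans with (c k * d k / (c k + d k)).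
      apply g_mono; auto.
      apply (LBexp Hps Hm Hpos (Hc k) (Hmu k) (Rle_trans _ _ _ H0 H1) Ht HPt (Hd k)).
    - rewrite Hd1. apply Rlt_le_trans with (c k * (mu k + d k) / (c k + (mu k + d k))).
      apply (UBexp Hps Hm Hpos Hrho (Hc k) (Hmu k) (Rle_trans _ _ _ H0 H1) He HPe (Hd k)).
      apply g_mono; auto. pose proof (Hmu k); lra. lra. }
  assert (Inv : forall k, 0 <= d0 k /\ d0 k <= d k /\ d k <= d1 k).
  { induction k. lra. destruct IHk as [H0 [H1 H2]].
    destruct (Step k H0 H1 H2). split; [|lra]. rewrite Hd0. apply g_nonneg; auto. }
  intros [|k] Hk. lia. destruct (Inv k) as [H0 [H1 H2]]. apply Step; auto.
Qed.
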